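(* Suppose the data are generated from the uncontaminated causal invertible VARMA model $\phi_0(L)x_t=\theta_0(L)\varepsilon_t$. Let $H_T\subset\{1,\dots,T\}$ be a (possibly data-dependent) retained subset, let $\kappa\ge 0$ be an integer, and let $\hat\varphi_T(\cdot)$ be the minimiser over $\mathcal V$ of the residual-based criterion $f_T(\varphi,\cdot)$. Assume: (A1, local optimisation stability) there is an open set $\mathcal N\subset\mathcal V$ such that, with probability tending to one as $T\to\infty$: (i) there exists $\delta>0$ with $\inf_{\varphi\notin\mathcal N}f_T(\varphi,H_T)\ge\inf_{\varphi\in\mathcal N}f_T(\varphi,H_T)+\delta$; and (ii) for every $\varepsilon>0$ there exists $\eta_\varepsilon>0$ with $\inf_{\varphi\in\mathcal N,\ \|\varphi-\hat\varphi_T(H_T)\|\ge\varepsilon}f_T(\varphi,H_T)\ge f_T(\hat\varphi_T(H_T),H_T)+\eta_\varepsilon$; (A2, stability under patch removal) $\sup_{\varphi\in\mathcal V}|f_T(\varphi,H_T)-f_T(\varphi,S^\kappa H_T)|\to 0$ in probability. Then, with probability tending to one, on the same open set $\mathcal N$: (i) there exists $\delta'>0$ with $\inf_{\varphi\notin\mathcal N}f_T(\varphi,S^\kappa H_T)\ge\inf_{\varphi\in\mathcal N}f_T(\varphi,S^\kappa H_T)+\delta'$; (ii) for every $\varepsilon>0$ there exists $\eta'_\varepsilon>0$ with $\inf_{\varphi\in\mathcal N,\ \|\varphi-\hat\varphi_T(S^\kappa H_T)\|\ge\varepsilon}f_T(\varphi,S^\kappa H_T)\ge f_T(\hat\varphi_T(S^\kappa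 H_T),S^\kappa H_T)+\eta'_\varepsilon$. Furthermore, $$(K^\kappa\hat\varphi_T)(H_T)-\hat\varphi_T(H_T)\overset{p}{\longrightarrow}0.$$ If instead $\hat\varphi_T$ is a maximiser of the criterion, the same statement holds with every infimum replaced by a supremum and every inequality of the form ''$\ge\ \cdot+c$'' replaced by ''$\le\ \cdot-c$'', in both the hypotheses and the conclusions.
   Context: Setting: $\{x_t\}$ is a $d$-dimensional mean-zero process with $\phi_0(L)x_t=\theta_0(L)\varepsilon_t$ (VARMA$(p,q)$), $\varepsilon_t$ zero-mean innovations. The parameter space $\mathcal V$ consists of $\varphi=(\phi,\theta)$ for which the model is causal and invertible; $\varphi_0=(\phi_0,\theta_0)\in\mathcal V$. For $\varphi\in\mathcal V$, $e_t(\varphi)=\theta^{-1}(L)\phi(L)x_t$ is the residual, so $e_t(\varphi_0)=\varepsilon_t$. For a subset $H\subset\{1,\dots,T\}$, the sample criterion is $f_T(\varphi,H)=g_T(\{e_t(\varphi):t\in H\})$ for some function $g_T$ (it depends on $\varphi$ only through these residuals), and $\hat\varphi_T(H)$ denotes an exact optimiser of $f_T(\cdot,H)$ over $\mathcal V$. Patch removal: with $H_T^c=\{1,\dots,T\}\setminus H_T$, $S^\kappa H_T=H_T\setminus\bigcup_{t\in H_T^c}\{t+1,\dots,\min(t+\kappa,T)\}$, and the patch removal operator acts on estimators by $(K^\kappa\hat\varphi_T)(H_T)=\hat\varphi_T(S^\kappa H_T)$. $\kappa$ may depend on $T$. *)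

(* Defs.v *)
From HB Require Import structures.
From mathcomp Require Import all_boot all_order all_algebra.
From mathcomp Require Import all_classical all_reals all_analysis.
From mathcomp Require Import complex.
Import Order.TTheory GRing.Theory Num.Theory.
Import numFieldNormedType.Exports.

Set Implicit Arguments.
Unset Strict Implicit.
Unset Printing Implicit Defensive.

Local Open Scope ring_scope.
Local Open Scope classical_set_scope.

Section VARMA.
Variables (R : realType) (d p q : nat).

(* A parameter varphi = (phi, theta) is stored as the d x (p*d + q*d) matrix
   [Phi_1 ... Phi_p | Theta_1 ... Theta_q]; its norm is the library's
   (max-entry) matrix norm. *)
Definition param := 'M[R]_(d, p * d + q * d).

(* Phi_{k+1}, k : 'I_p *)
Definition ar_coef (phi : param) (k : 'I_p) : 'M[R]_d :=
  \matrix_(i < d, j < d) phi i (lshift (q * d) (mxvec_index k j)).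
(* Theta_{k+1}, k : 'I_q *)
Definition ma_coef (phi : param) (k : 'I_q) : 'M[R]_d :=
  \matrix_(i < d, j < d) phi i (rshift (p * d) (mxvec_index k j)).

Definition ar_poly_at (phi : param) (z : R[i]) : 'M[R[i]]_d :=
  1%:M - \sum_(k < p) z ^+ k.+1 *: map_mx (real_complex R) (ar_coef phi k).
Definition ma_poly_at (phi : param) (z : R[i]) : 'M[R[i]]_d :=
  1%:M + \sum_(k < q) z ^+ k.+1 *: map_mx (real_complex R) (ma_coef phi k).

Definition causal (phi : param) : Prop :=
  forall z : R[i], `|z| <= 1 -> \det (ar_poly_at phi z) != 0.
Definition invertible (phi : param) : Prop :=
  forall z : R[i], `|z| <= 1 -> \det (ma_poly_at phi z) != 0.

Definition param_space : set param := [set phi | causal phi /\ invertible phi].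

Definition ar_filter (phi : param) (x : int -> 'cV[R]_d) (t : int) : 'cV[R]_d :=
  x t - \sum_(k < p) ar_coef phi k *m x (t - (k.+1)%:Z).
Definition ma_filter (phi : param) (e : int -> 'cV[R]_d) (t : int) : 'cV[R]_d :=
  e t + \sum_(k < q) ma_coef phi k *m e (t - (k.+1)%:Z).

(* coefficients Psi_k of the power series theta^{-1}(z) = sum_k Psi_k z^k:
   Psi_0 = I, Psi_k = - sum_{j=1}^{min(k,q)} Theta_j Psi_{k-j} *)
Fixpoint psi_upto (phi : param) (n : nat) : nat -> 'M[R]_d :=
  match n with
  | 0 => fun k => if k == 0%N then 1%:M else 0
  | n'.+1 => let f := psi_upto phi n' in
      fun k => if k == n'.+1 then
                 - \sum_(m < q | (m < n'.+1)%N) ma_coef phi m *m f (n' - m)%N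
               else f k
  end.
Definition ma_inv_coef (phi : param) (k : nat) : 'M[R]_d := psi_upto phi k k.

(* residual e_t(varphi) = theta^{-1}(L) phi(L) x_t *)
Definition residual (phi : param) (x : int -> 'cV[R]_d) (t : int) : 'cV[R]_d :=
  lim ((fun n : nat => \sum_(k < n) ma_inv_coef phi k *m ar_filter phi x (t - k%:Z))
         @ \oo).

(* sample criterion f_T(varphi, H) = g_T({e_t(varphi) : t in H}); the indexed
   family {e_t : t in H} is passed to g_T as (H, t |-> e_t masked outside H). *)
Definition criterion (g : nat -> set nat -> (nat -> 'cV[R]_d) -> R)
  (x : int -> 'cV[R]_d) (T : nat) (phi : param) (H : set nat) : R :=
  g T H (fun t : nat => if `[< H t >] then residual phi x t%:Z else 0).

End VARMA.

Definition obs_range (T : nat) : set nat := [set t | (1 <= t <= T)%N].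

Definition patch_remove (T kappa : nat) (H : set nat) : set nat :=
  [set t | H t /\
     ~ (exists s, (1 <= s <= T)%N /\ ~ H s /\ (s < t <= minn (s + kappa) T)%N)].

Definition Kop {A : Type} (kappa : nat -> nat) (est : nat -> set nat -> A)
  : nat -> set nat -> A :=
  fun T H => est T (patch_remove T (kappa T) H).

Section Prob.
Variables (R : realType) (dO : measure_display) (Omega : measurableType dO)
  (P : probability Omega R).

(* "with probability tending to one, A_T holds": there are events
   E_T contained in A_T with P(E_T) -> 1 (inner probability, so that no
   measurability of A_T is presupposed). *)
Definition wptto (A : nat -> set Omega) : Prop :=
  exists E : nat -> set Omega,
    (forall T, measurable (E T)) /\ (forall T, E T `<=` A T) /\
    ((fun T => P (E T)) @ \oo --> 1%E).

Definition cvg_in_prob0 {V : normedModType R} (X : nat -> Omega -> V) : Prop :=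
  forall e : R, 0 < e -> wptto (fun T => [set w | `|X T w| < e]).

Definition varma_dgp (d p q : nat) (x eps : int -> Omega -> 'cV[R]_d)
  (phi0 : param R d p q) : Prop :=
  param_space phi0 /\
  (forall w t, ar_filter phi0 (fun s => x s w) t = ma_filter phi0 (fun s => eps s w) t) /\
  (forall t (i : 'I_d), P.-integrable setT (fun w => (x t w i ord0)%:E) /\
                        ('E_P[fun w => x t w i ord0] = 0)%E) /\
  (forall t (i : 'I_d), P.-integrable setT (fun w => (eps t w i ord0)%:E) /\
                        ('E_P[fun w => eps t w i ord0] = 0)%E).

Variables (Par : normedModType R).

Definition is_minimiser (V : set Par) (F : nat -> Par -> set nat -> Omega -> R)
  (est : nat -> set nat -> Omega -> Par) : Prop :=
  forall T H w, H `<=` obs_range T ->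
    V (est T H w) /\ forall phi, V phi -> (F T (est T H w) H w <= F T phi H w).
Definition is_maximiser (V : set Par) (F : nat -> Par -> set nat -> Omega -> R)
  (est : nat -> set nat -> Omega -> Par) : Prop :=
  forall T H w, H `<=` obs_range T ->
    V (est T H w) /\ forall phi, V phi -> (F T phi H w <= F T (est T H w) H w).

Definition loc_stab_min (V N : set Par) (F : nat -> Par -> set nat -> Omega -> R)
  (est : nat -> set nat -> Omega -> Par) (Hs : nat -> Omega -> set nat) : Prop :=
  (exists2 delta : R, 0 < delta &
     wptto (fun T => [set w |
       (ereal_inf [set (F T phi (Hs T w) w)%:E | phi in V `\` N]
        >= ereal_inf [set (F T phi (Hs T w) w)%:E | phi in N] + delta%:E)%E])) /\
  (forall e : R, 0 < e -> exists2 eta : R, 0 < eta &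
     wptto (fun T => [set w |
       (ereal_inf [set (F T phi (Hs T w) w)%:E
                    | phi in [set phi | N phi /\ (e <= `|phi - est T (Hs T w) w|)%R]]
        >= (F T (est T (Hs T w) w) (Hs T w) w + eta)%:E)%E])).

Definition loc_stab_max (V N : set Par) (F : nat -> Par -> set nat -> Omega -> R)
  (est : nat -> set nat -> Omega -> Par) (Hs : nat -> Omega -> set nat) : Prop :=
  (exists2 delta : R, 0 < delta &
     wptto (fun T => [set w |
       (ereal_sup [set (F T phi (Hs T w) w)%:E | phi in V `\` N]
        <= ereal_sup [set (F T phi (Hs T w) w)%:E | phi in N] - delta%:E)%E])) /\
  (forall e : R, 0 < e -> exists2 eta : R, 0 < eta &
     wptto (fun T => [set w |
       (ereal_sup [set (F T phi (Hs T w) w)%:E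
                    | phi in [set phi | N phi /\ (e <= `|phi - est T (Hs T w) w|)%R]]
        <= (F T (est T (Hs T w) w) (Hs T w) w - eta)%:E)%E])).

Definition patch_stable (V : set Par) (F : nat -> Par -> set nat -> Omega -> R)
  (kappa : nat -> nat) (Hs : nat -> Omega -> set nat) : Prop :=
  forall e : R, 0 < e -> wptto (fun T => [set w |
    (ereal_sup [set (`|F T phi (Hs T w) w
                       - F T phi (patch_remove T (kappa T) (Hs T w)) w|)%:E
                | phi in V] < e%:E)%E]).

End Prob.

(* Main.v *)
Require Import Defs.
From HB Require Import structures.
From mathcomp Require Import all_boot all_order all_algebra.
From mathcomp Require Import all_classical all_reals all_analysis.
From mathcomp Require Import complex.
From mathcomp Require Import ring lra.
Import Order.TTheory GRing.Theory Num.Theory.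
Import numFieldNormedType.Exports.
Local Open Scope ring_scope.
Local Open Scope classical_set_scope.

Lemma absB_le (R : realType) (x y e : R) : `|x - y| < e -> x - e < y /\ y < x + e.
Proof. rewrite ltr_norml => /andP[h1 h2]; split; lra. Qed.

Lemma det_i (R : realType) (Par : Type) (V N : set Par) (f g : Par -> R) (e0 d : R) :
 N `<=` V -> (forall φ, V φ -> `|f φ - g φ| < e0) ->
 (ereal_inf [set (f φ)%:E | φ in V `\` N] >= ereal_inf [set (f φ)%:E | φ in N] + d%:E)%E ->
 (ereal_inf [set (g φ)%:E | φ in V `\` N] >= ereal_inf [set (g φ)%:E | φ in N] + (d - 2*e0)%:E)%E.
Proof.
move=> NV A H.
set b := ereal_inf [set (g φ)%:E | φ in N].
set a := ereal_inf [set (f φ)%:E | φ in N].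
have ba : (b - e0%:E <= a)%E.
  apply: le_ereal_inf_tmp => _ [ψ Nψ <-]; rewrite leeBlDr //.
  apply: le_trans (ereal_inf_lbound _) _; first by exists ψ.
  have [h1 h2] := absB_le _ _ _ _ (A ψ (NV ψ Nψ)).
  by rewrite -EFinD lee_fin ltW.
apply: le_ereal_inf_tmp => _ [φ [Vφ nNφ] <-].
have h1 : (a + d%:E <= (f φ)%:E)%E.
  apply: le_trans H _; apply: ereal_inf_lbound; by exists φ.
have -> : (b + (d - 2 * e0)%:E = (b - e0%:E) + (d - e0)%:E)%E.
  by rewrite -addeA -EFinD; congr (_ + _)%E; congr (_%:E); ring.
apply: le_trans (leeD ba (le_refl _)) _.
rewrite EFinB addeA.
apply: le_trans (leeB h1 (le_refl _)) _.
have [h2 h3] := absB_le _ _ _ _ (A φ Vφ).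
by rewrite -EFinB lee_fin ltW.
Qed.

Lemma det_cons (R : realType) (Par : normedModType R) (V N : set Par) (f g : Par -> R)
  (h s : Par) (e0 d eta eps : R) :
 N `<=` V -> V h -> (forall φ, V φ -> f h <= f φ) -> V s -> (forall φ, V φ -> g s <= g φ) ->
 (forall φ, V φ -> `|f φ - g φ| < e0) -> 2 * e0 <= d -> 2 * e0 <= eta ->
 (ereal_inf [set (f φ)%:E | φ in V `\` N] >= ereal_inf [set (f φ)%:E | φ in N] + d%:E)%E ->
 (ereal_inf [set (f φ)%:E | φ in [set φ | N φ /\ (eps <= `|φ - h|)%R]] >= (f h + eta)%:E)%E ->
 `|s - h| < eps.
Proof.
move=> NV Vh mh Vs ms A de ee H1 H2.
have [a1 a2] := absB_le _ _ _ _ (A s Vs).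
have [b1 b2] := absB_le _ _ _ _ (A h Vh).
have gsh := ms h Vh.
rewrite ltNge; apply/negP => hle.
case: (pselect (N s)) => Ns.
  have : ((f h + eta)%:E <= (f s)%:E)%E.
    by apply: le_trans H2 _; apply: ereal_inf_lbound; exists s.
  rewrite lee_fin => ?; lra.
have : (ereal_inf [set (f φ)%:E | φ in N] + d%:E <= (f s)%:E)%E.
  by apply: le_trans H1 _; apply: ereal_inf_lbound; exists s.
have : ((f h)%:E <= ereal_inf [set (f φ)%:E | φ in N])%E.
  by apply: le_ereal_inf_tmp => _ [ψ Nψ <-]; rewrite lee_fin; apply: mh; apply: NV.
move=> l1 l2; have := le_trans (leeD l1 (le_refl d%:E)) l2.
rewrite -EFinD lee_fin => ?; lra.
Qed.

Lemma det_ii (R : realType) (Par : normedModType R) (V N : set Par) (f g : Par -> R)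
  (h s : Par) (e0 eta eps : R) :
 N `<=` V -> V h -> V s -> (forall φ, V φ -> g s <= g φ) ->
 (forall φ, V φ -> `|f φ - g φ| < e0) -> `|s - h| < eps / 2 ->
 (ereal_inf [set (f φ)%:E | φ in [set φ | N φ /\ (eps / 2 <= `|φ - h|)%R]] >= (f h + eta)%:E)%E ->
 (ereal_inf [set (g φ)%:E | φ in [set φ | N φ /\ (eps <= `|φ - s|)%R]] >= (g s + (eta - 2 * e0))%:E)%E.
Proof.
move=> NV Vh Vs ms A hs H.
apply: le_ereal_inf_tmp => _ [φ [Nφ le] <-].
have dh : eps / 2 <= `|φ - h|.
  have t : `|φ - s| <= `|φ - h| + `|h - s| by apply: ler_distD.
  rewrite distrC in hs; lra.
have : ((f h + eta)%:E <= (f φ)%:E)%E.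
  by apply: le_trans H _; apply: ereal_inf_lbound; exists φ.
rewrite !lee_fin => l.
have [a1 a2] := absB_le _ _ _ _ (A φ (NV φ Nφ)).
have [b1 b2] := absB_le _ _ _ _ (A h Vh).
have gsh := ms h Vh.
lra.
Qed.

Lemma sup_lt (R : realType) (Par : Type) (V : set Par) (u : Par -> R) (e : R) :
  (ereal_sup [set (u φ)%:E | φ in V] < e%:E)%E -> forall φ, V φ -> u φ < e.
Proof.
move=> H φ Vφ; rewrite -lte_fin; apply: le_lt_trans H.
by apply: ereal_sup_ubound; exists φ.
Qed.

Lemma two_min (R : realType) (a b : R) : 0 < a -> 0 < b ->
  exists e, [/\ 0 < e, 2 * e <= a & 2 * e <= b].
Proof.
move=> a0 b0; case: (lerP a b) => ab.
  by exists (a / 2); split; lra.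
by exists (b / 2); split; lra.
Qed.

Lemma wptto_sub (R : realType) dO (Omega : measurableType dO) (P : probability Omega R)
  (A B : nat -> set Omega) : (forall T, A T `<=` B T) -> wptto P A -> wptto P B.
Proof.
move=> AB [E [mE [EA cE]]]; exists E; split=> //; split=> // T.
exact: subset_trans (EA T) (AB T).
Qed.

Lemma wptto_and (R : realType) dO (Omega : measurableType dO) (P : probability Omega R)
  (A B : nat -> set Omega) : wptto P A -> wptto P B -> wptto P (fun T => A T `&` B T).
Proof.
move=> [E1 [m1 [s1 c1]]] [E2 [m2 [s2 c2]]].
exists (fun T => E1 T `&` E2 T); split; first by move=> T; exact: measurableI.
split; first by move=> T w [/s1 ? /s2 ?].
apply: (@squeeze_cvge _ _ _ _ (fun T => P (E1 T) + P (E2 T) - 1)%E _ (cst 1%E)).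
- apply: nearW => T; apply/andP; split; last exact: probability_le1 (measurableI _ _ (m1 T) (m2 T)).
  rewrite (measureDI P (m1 T) (m2 T)).
  have h : (P (E1 T `\` E2 T) + P (E2 T) <= 1)%E.
    have mD : measurable (E1 T `\` E2 T) by exact: measurableD.
    rewrite -(measureU P mD (m2 T)).
    - by apply: probability_le1; apply: measurableU.
    - by rewrite setDE -setIA setICl setI0.
  rewrite leeBlDr // -addeA [X in (_ + X)%E]addeC addeA [X in (_ <= X)%E]addeC.
  by apply: leeD.
- have := cvgeB _ (cvgeD _ c1 c2) (cvg_cst (1%E : \bar R)).
  by rewrite /= -EFinD -EFinB addrK; apply.
- exact: cvg_cst.
Qed.

Arguments wptto_sub {R dO Omega P A B}.
Arguments wptto_and {R dO Omega P A B}.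

Lemma main_min (R : realType) dO (Omega : measurableType dO) (P : probability Omega R)
  (Par : normedModType R) (V N : set Par) (F : nat -> Par -> set nat -> Omega -> R)
  (est : nat -> set nat -> Omega -> Par) (Hs : nat -> Omega -> set nat) (kappa : nat -> nat) :
  (forall T w, Hs T w `<=` obs_range T) -> N `<=` V ->
  is_minimiser V F est -> loc_stab_min P V N F est Hs -> patch_stable P V F kappa Hs ->
  loc_stab_min P V N F est (fun T w => patch_remove T (kappa T) (Hs T w)) /\
  cvg_in_prob0 P (fun T w => Kop kappa est T (Hs T w) w - est T (Hs T w) w).
Proof.
move=> HsO NV Hmin [[δ δ0 W1] W2] A2.
set SH := fun T w => patch_remove T (kappa T) (Hs T w).
have SHO : forall T w, SH T w `<=` obs_range T.
  by move=> T w t [Ht _]; apply: HsO Ht.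
have cons : forall eps, 0 < eps ->
    wptto P (fun T => [set w | `|est T (SH T w) w - est T (Hs T w) w| < eps]).
  move=> eps eps0; have [η η0 W] := W2 eps eps0.
  have [e1 [e10 e1d e1η]] := two_min _ _ _ δ0 η0.
  apply: (wptto_sub _ (wptto_and (wptto_and W1 W) (A2 e1 e10))).
  move=> T w [[H1 H2] H3] /=.
  have [Vh mh] := Hmin T (Hs T w) w (HsO T w).
  have [Vs ms] := Hmin T (SH T w) w (SHO T w).
  apply: (det_cons _ _ _ _ (fun φ => F T φ (Hs T w) w) (fun φ => F T φ (SH T w) w) _ _ _ _ _ _)
    NV Vh mh Vs ms _ e1d e1η H1 H2.
  exact: sup_lt H3.
split; last first.
  by move=> e e0; apply: cons.
split.
  exists (δ / 2); first lra.
  apply: (wptto_sub _ (wptto_and W1 (A2 (δ / 4) ltac:(lra)))).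
  move=> T w [H1 H3] /=.
  have -> : δ / 2 = δ - 2 * (δ / 4) by field.
  apply: (det_i _ _ _ _ (fun φ => F T φ (Hs T w) w) (fun φ => F T φ (SH T w) w) _ _) NV _ H1.
  exact: sup_lt H3.
move=> eps eps0.
have [η η0 W] := W2 (eps / 2) ltac:(lra).
exists (η / 2); first lra.
apply: (wptto_sub _ (wptto_and (wptto_and W (A2 (η / 4) ltac:(lra))) (cons (eps / 2) ltac:(lra)))).
move=> T w [[H2 H3] Hc] /=.
have [Vh mh] := Hmin T (Hs T w) w (HsO T w).
have [Vs ms] := Hmin T (SH T w) w (SHO T w).
have -> : η / 2 = η - 2 * (η / 4) by field.
apply: (det_ii _ _ _ _ (fun φ => F T φ (Hs T w) w) (fun φ => F T φ (SH T w) w) _ _ _ _ _)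
  NV Vh Vs ms _ Hc H2.
exact: sup_lt H3.
Qed.

Lemma inf_neg (R : realType) (Par : Type) (A : set Par) (u : Par -> R) :
  ereal_inf [set (- u φ)%:E | φ in A] = (- ereal_sup [set (u φ)%:E | φ in A])%E.
Proof.
rewrite /ereal_inf; congr (- ereal_sup _)%E.
rewrite image_comp; apply: eq_imagel => φ _ /=; by rewrite opprK.
Qed.

Lemma neg_ineq1 (R : realType) (x y : \bar R) (d : R) :
  (x <= y - d%:E)%E = (- y + d%:E <= - x)%E.
Proof. by rewrite -leeN2 oppeB //; case: y. Qed.

Lemma neg_ineq2 (R : realType) (x : \bar R) (a d : R) :
  (x <= (a - d)%:E)%E = ((- a + d)%:E <= - x)%E.
Proof. by rewrite -leeN2 -EFinN opprB addrC. Qed.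

Lemma stab_neg (R : realType) dO (Omega : measurableType dO) (P : probability Omega R)
  (Par : normedModType R) (V N : set Par) (F : nat -> Par -> set nat -> Omega -> R)
  (est : nat -> set nat -> Omega -> Par) (Hs : nat -> Omega -> set nat) :
  loc_stab_max P V N F est Hs <->
  loc_stab_min P V N (fun T φ H w => - F T φ H w) est Hs.
Proof.
rewrite /loc_stab_max /loc_stab_min; split.
- move=> [[δ δ0 W1] W2]; split.
  + exists δ => //; apply: (wptto_sub _ W1) => T w /=.
    rewrite (inf_neg _ _ _ (fun φ => F T φ (Hs T w) w)) (inf_neg _ _ _ (fun φ => F T φ (Hs T w) w)).
    by rewrite -neg_ineq1.
  + move=> e e0; have [η η0 W] := W2 e e0; exists η => //.
    apply: (wptto_sub _ W) => T w /=.
    by rewrite (inf_neg _ _ _ (fun φ => F T φ (Hs T w) w)) -neg_ineq2.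
- move=> [[δ δ0 W1] W2]; split.
  + exists δ => //; apply: (wptto_sub _ W1) => T w /=.
    rewrite (inf_neg _ _ _ (fun φ => F T φ (Hs T w) w)) (inf_neg _ _ _ (fun φ => F T φ (Hs T w) w)).
    by rewrite -neg_ineq1.
  + move=> e e0; have [η η0 W] := W2 e e0; exists η => //.
    apply: (wptto_sub _ W) => T w /=.
    by rewrite (inf_neg _ _ _ (fun φ => F T φ (Hs T w) w)) -neg_ineq2.
Qed.

Lemma patch_neg (R : realType) dO (Omega : measurableType dO) (P : probability Omega R)
  (Par : normedModType R) (V : set Par) (F : nat -> Par -> set nat -> Omega -> R)
  kappa (Hs : nat -> Omega -> set nat) :
  patch_stable P V F kappa Hs -> patch_stable P V (fun T φ H w => - F T φ H w) kappa Hs.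
Proof.
move=> A e e0; apply: (wptto_sub _ (A e e0)) => T w /=.
congr (_ < _)%E; congr ereal_sup; apply: eq_imagel => φ _ /=.
by rewrite -opprD normrN.
Qed.

Lemma maxi_neg (R : realType) dO (Omega : measurableType dO)
  (Par : normedModType R) (V : set Par) (F : nat -> Par -> set nat -> Omega -> R)
  (est : nat -> set nat -> Omega -> Par) :
  is_maximiser V F est -> is_minimiser V (fun T φ H w => - F T φ H w) est.
Proof.
move=> M T H w HO; have [Ve Me] := M T H w HO; split => // φ Vφ.
by rewrite lerN2; apply: Me.
Qed.

Theorem theorem1 (R : realType) (d p q : nat)
  (dO : measure_display) (Omega : measurableType dO) (P : probability Omega R)
  (x eps : int -> Omega -> 'cV[R]_d) (phi0 : param R d p q)
  (g : nat -> set nat -> (nat -> 'cV[R]_d) -> R)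
  (Hs : nat -> Omega -> set nat) (kappa : nat -> nat)
  (N : set (param R d p q)) :
  varma_dgp P x eps phi0 ->
  (forall T w, Hs T w `<=` obs_range T) ->
  open N -> N `<=` @param_space R d p q ->
  let F := fun T phi H w => criterion g (fun s => x s w) T phi H in
  let SHs := fun T w => patch_remove T (kappa T) (Hs T w) in
  (forall est : nat -> set nat -> Omega -> param R d p q,
     is_minimiser (@param_space R d p q) F est ->
     loc_stab_min P (@param_space R d p q) N F est Hs ->
     patch_stable P (@param_space R d p q) F kappa Hs ->
     loc_stab_min P (@param_space R d p q) N F est SHs /\
     cvg_in_prob0 P (fun T w => Kop kappa est T (Hs T w) w - est T (Hs T w) w))
  /\
  (forall est : nat -> set nat -> Omega -> param R d p q,
     is_maximiser (@param_space R d p q) F est ->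
     loc_stab_max P (@param_space R d p q) N F est Hs ->
     patch_stable P (@param_space R d p q) F kappa Hs ->
     loc_stab_max P (@param_space R d p q) N F est SHs /\
     cvg_in_prob0 P (fun T w => Kop kappa est T (Hs T w) w - est T (Hs T w) w)).
Proof.
move=> dgp HsO oN NV F SHs; split.
- move=> est Hm Hl Hp.
  have := main_min _ _ _ _ _ _ _ _ _ _ _ HsO NV Hm Hl Hp.
  by rewrite /SHs.
- move=> est Hm Hl Hp.
  pose G := fun T φ H w => - F T φ H w.
  have Hm' := maxi_neg _ _ _ _ _ F est Hm.
  idtac "A".
  have Hl' := proj1 (stab_neg _ _ _ P _ _ N F est Hs) Hl.
  idtac "B".
  have Hp' := patch_neg _ _ _ P _ _ F kappa Hs Hp.
  idtac "C".
  have := main_min _ _ _ P _ _ N _ est Hs kappa HsO NV Hm' Hl' Hp'.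
  idtac "D".
  move=> -[H1 H2]; split; last exact: H2.
  idtac "E".
  apply/(stab_neg _ _ _ P _ _ N F est SHs).
  idtac "F".
  exact: H1.
Qed.
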